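(* For all integers $a$ and $\ell$ with $3\le a\le\ell$ there is a connected graph $F$ with $v(F)=\ell$ and $\mathrm{tw}(F)=a-1$ such that $D_{\mathrm{tw}}(F)\le a$. Specifically, $D_{\mathrm{tw}}(L_{a,b})=W_\kappa(L_{a,b})=a$ for all $a\ge3$ and $b\ge0$.
   Context: Graphs are finite simple graphs; $v(F)$ is the number of vertices and $\mathrm{tw}(F)$ the treewidth. A graph is $k$-connected if it has more than $k$ vertices, is connected, and remains connected after removal of any $k-1$ vertices; the connectivity $\kappa(G)$ is the maximum $k$ such that $G$ is $k$-connected. We use first-order logic of graphs with relation symbols for adjacency and equality only; the variable width of a sentence is the number of distinct variables it uses. For a graph parameter $\pi$, $D_\pi(F)$ (resp. $W_\pi(F)$) is the minimum quantifier depth (resp. variable width) of a first-order sentence $\Phi$ for which there is an integer $k$ such that for every connected graph $G$ with $\pi(G)\ge k$, $G\models\Phi$ if and only if $G$ contains a (not necessarily induced) subgraph isomorphic to $F$. For $a\ge3$, $b\ge1$, the lollipop graph $L_{a,b}$ is obtained from the complete graph $K_a$ and the path $P_b$ on $b$ vertices by adding an edge between an end vertex of $P_b$ and a vertex of $K_a$; by convention $L_{a,0}=K_a$. *)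

(* Defs.v *)
From mathcomp Require Import all_boot.
From Stdlib Require Import ClassicalEpsilon.

Set Implicit Arguments.
Unset Strict Implicit.
Unset Printing Implicit Defensive.

Record graph := Graph {
  vert : finType;
  adj : rel vert;
  adj_sym : symmetric adj;
  adj_irr : irreflexive adj }.

Definition nverts (G : graph) : nat := #|vert G|.

Definition connected (G : graph) : Prop :=
  0 < #|vert G| /\ forall x y : vert G, connect (@adj G) x y.

Definition k_connected (G : graph) (k : nat) : Prop :=
  k < #|vert G| /\ connected G /\
  forall S : {set vert G}, #|S| < k ->
    forall x y : vert G, x \notin S -> y \notin S ->
      connect [rel u v | adj u v && (u \notin S) && (v \notin S)] x y.

Definition kappa (G : graph) : nat :=
  epsilon (inhabits 0%N)
    (fun k => k_connected G k /\ forall k', k_connected G k' -> k' <= k).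

Definition subgraph (F G : graph) : Prop :=
  exists f : vert F -> vert G, injective f /\
    forall u v : vert F, adj u v -> adj (f u) (f v).

Definition is_tree (I : finType) (t : rel I) : Prop :=
  symmetric t /\ irreflexive t /\ 0 < #|I| /\
  (forall i j : I, connect t i j) /\
  ~ (exists c : seq I, 2 < size c /\ uniq c /\ cycle t c).

Definition has_tree_decomp (G : graph) (w : nat) : Prop :=
  exists (I : finType) (t : rel I) (B : I -> {set vert G}),
    [/\ is_tree t,
        (forall v : vert G, exists i, v \in B i),
        (forall u v : vert G, adj u v -> exists i, (u \in B i) && (v \in B i)),
        (forall (v : vert G) (i j : I), v \in B i -> v \in B j ->
            connect [rel x y | t x y && (v \in B x) && (v \in B y)] i j)
      & (forall i, #|B i| <= w.+1)].

Definition tw (G : graph) : nat :=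
  epsilon (inhabits 0%N)
    (fun w => has_tree_decomp G w /\ forall w', has_tree_decomp G w' -> w <= w').

Inductive form :=
| FAdj of nat & nat
| FEq of nat & nat
| FNot of form
| FAnd of form & form
| FOr of form & form
| FEx of nat & form
| FAll of nat & form.

Definition upd (T : Type) (s : nat -> T) (x : nat) (v : T) : nat -> T :=
  fun n => if n == x then v else s n.

Fixpoint sat (G : graph) (s : nat -> vert G) (f : form) : Prop :=
  match f with
  | FAdj x y => adj (s x) (s y)
  | FEq x y => s x = s y
  | FNot g => ~ sat s g
  | FAnd g h => sat s g /\ sat s h
  | FOr g h => sat s g \/ sat s h
  | FEx x g => exists v, sat (upd s x v) g
  | FAll x g => forall v, sat (upd s x v) g
  end.

Fixpoint fv (f : form) : seq nat :=
  match f with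
  | FAdj x y | FEq x y => [:: x; y]
  | FNot g => fv g
  | FAnd g h | FOr g h => fv g ++ fv h
  | FEx x g | FAll x g => filter (predC1 x) (fv g)
  end.

Definition sentence (f : form) : Prop := fv f = [::].

(** G |= Phi (for sentences, independent of the assignment) *)
Definition models (G : graph) (f : form) : Prop :=
  forall s : nat -> vert G, sat s f.

Fixpoint qdepth (f : form) : nat :=
  match f with
  | FAdj _ _ | FEq _ _ => 0
  | FNot g => qdepth g
  | FAnd g h | FOr g h => maxn (qdepth g) (qdepth h)
  | FEx _ g | FAll _ g => (qdepth g).+1
  end.

Fixpoint vars (f : form) : seq nat :=
  match f with
  | FAdj x y | FEq x y => [:: x; y]
  | FNot g => vars g
  | FAnd g h | FOr g h => vars g ++ vars h
  | FEx x g | FAll x g => x :: vars g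
  end.

Definition vwidth (f : form) : nat := size (undup (vars f)).

Definition defines_sub (pi : graph -> nat) (F : graph) (f : form) : Prop :=
  sentence f /\
  exists k : nat, forall G : graph, connected G -> k <= pi G ->
    (models G f <-> subgraph F G).

Definition D_pi (pi : graph -> nat) (F : graph) : nat :=
  epsilon (inhabits 0%N)
    (fun n => (exists f, defines_sub pi F f /\ qdepth f = n) /\
              forall f, defines_sub pi F f -> n <= qdepth f).

Definition W_pi (pi : graph -> nat) (F : graph) : nat :=
  epsilon (inhabits 0%N)
    (fun n => (exists f, defines_sub pi F f /\ vwidth f = n) /\
              forall f, defines_sub pi F f -> n <= vwidth f).

(** * Lollipop graphs L_{a,b}: vertices 0..a-1 form K_a, vertices
    a..a+b-1 form the path P_b, and the edge {a-1, a} joins the end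
    vertex a of the path to the clique vertex a-1.  L_{a,0} = K_a. *)
Definition lol_adj (a b : nat) : rel 'I_(a + b) :=
  fun u v => (u != v) &&
    ((((u < a) && (v < a)) || ((u.+1 == v) && (a <= v)))
     || ((v.+1 == u) && (a <= u))).

Lemma lol_adj_sym a b : symmetric (@lol_adj a b).
Proof.
by move=> u v; rewrite /lol_adj eq_sym (andbC (v < a)) orbAC.
Qed.

Lemma lol_adj_irr a b : irreflexive (@lol_adj a b).
Proof. by move=> u; rewrite /lol_adj eqxx. Qed.

Definition lollipop (a b : nat) : graph :=
  Graph (@lol_adj_sym a b) (@lol_adj_irr a b).

(* Main.v *)
Require Import Defs.
From mathcomp Require Import all_boot zify.
From Stdlib Require Import Classical ClassicalEpsilon.
Set Implicit Arguments. Unset Strict Implicit. Unset Printing Implicit Defensive.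

Lemma min_ex (P : nat -> Prop) : (exists n, P n) -> exists n, P n /\ forall m, P m -> n <= m.
Proof.
move=> [n Pn]; elim: n {-2}n (leqnn n) Pn => [|N IH] n Hn Pn.
  exists n; split=> // m _; move: Hn; rewrite leqn0 => /eqP->; done.
case: (classic (exists m, m < n /\ P m)) => [[m [Hm Pm]]|H].
  apply: (IH m) => //; lia.
exists n; split=> // m Pm; rewrite leqNgt; apply/negP=> Hm; apply: H; by exists m.
Qed.

Lemma max_ex (P : nat -> Prop) B : (exists n, P n) -> (forall n, P n -> n <= B) ->
  exists n, P n /\ forall m, P m -> m <= n.
Proof.
move=> [n Pn] HB.
have: forall d n, B - n <= d -> P n -> exists n, P n /\ forall m, P m -> m <= n.
  elim=> [|d IH] {}n Hd {}Pn.
    exists n; split=> // m Pm; have := HB m Pm; lia.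
  case: (classic (exists m, n < m /\ P m)) => [[m [Hm Pm]]|H].
    apply: (IH m) => //; lia.
  exists n; split=> // m Pm; rewrite leqNgt; apply/negP=> Hm; apply: H; by exists m.
by move=> /(_ _ n (leqnn _) Pn).
Qed.

Lemma trivial_decomp (G : graph) : has_tree_decomp G #|vert G|.
Proof.
exists unit, [rel x y : unit | false], (fun _ => setT); split.
- split; first by [].
  split; first by [].
  split; first by rewrite card_unit.
  split; first by move=> [] []; exact: connect0.
  move=> [c [Hs [Hu _]]].
  have := max_card (mem c); rewrite card_unit (card_uniqP Hu); lia.
- by move=> v; exists tt; rewrite in_setT.
- by move=> u v _; exists tt; rewrite !in_setT.
- by move=> v [] [] _ _; exact: connect0.
- by move=> _; rewrite cardsT.
Qed.

Lemma tw_spec (G : graph) :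
  has_tree_decomp G (tw G) /\ forall w, has_tree_decomp G w -> tw G <= w.
Proof.
rewrite /tw; apply (epsilon_spec (inhabits 0%N)); apply: min_ex; exists #|vert G|; exact: trivial_decomp.
Qed.

Lemma tw_le (G : graph) w : has_tree_decomp G w -> tw G <= w.
Proof. by move=> H; apply: (proj2 (tw_spec G)). Qed.

Lemma tw_ge (G : graph) k : (forall w, has_tree_decomp G w -> k <= w) -> k <= tw G.
Proof. by move=> H; apply: H; exact: (proj1 (tw_spec G)). Qed.

Lemma kconn_mono (G : graph) k j : k_connected G k -> j <= k -> k_connected G j.
Proof.
move=> [H1 [H2 H3]] Hj; split; first lia.
split=> // S HS; apply: H3; lia.
Qed.

Lemma kappa_spec (G : graph) : connected G ->
  k_connected G (kappa G) /\ forall k, k_connected G k -> k <= kappa G.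
Proof.
move=> HG; rewrite /kappa; apply (epsilon_spec (inhabits 0%N)); apply: (@max_ex _ #|vert G|).
  exists 0; split; first by case: HG.
  by split=> // S; rewrite ltn0.
by move=> n [H _]; lia.
Qed.

Lemma kappa_ge (G : graph) k : connected G -> k_connected G k -> k <= kappa G.
Proof. by move=> HG Hk; apply: (proj2 (kappa_spec HG)). Qed.

Lemma kappa_le (G : graph) k : connected G -> k <= kappa G -> k_connected G k.
Proof. by move=> HG Hk; apply: (kconn_mono (proj1 (kappa_spec HG))). Qed.

Section ParTree.
Variables (I : finType) (r : I) (par : I -> I) (dep : I -> nat).
Hypothesis dep_r : dep r = 0.
Hypothesis dep_par : forall x, x != r -> dep x = (dep (par x)).+1.

Definition ptrel : rel I :=
  [rel x y | ((x != r) && (par x == y)) || ((y != r) && (par y == x))].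

Lemma ptrel_sym : symmetric ptrel.
Proof. by move=> x y; rewrite /ptrel /= orbC. Qed.

Lemma ptrel_irr : irreflexive ptrel.
Proof.
move=> x; rewrite /ptrel /= orbb; apply/negP => /andP[Hx /eqP Hp].
have := dep_par Hx; rewrite Hp; lia.
Qed.

Lemma conn_root x : connect ptrel x r.
Proof.
move: {2}(dep x) (erefl (dep x)) => n; elim: n x => [|n IH] x Hx.
  case: (eqVneq x r) => [->|Hr]; first exact: connect0.
  by have := dep_par Hr; rewrite Hx.
case: (eqVneq x r) => [->|Hr]; first exact: connect0.
apply: (connect_trans (connect1 _) (IH (par x) _)).
  by rewrite /ptrel /= Hr eqxx.
by have := dep_par Hr; rewrite Hx => -[].
Qed.

Lemma ptrel_conn i j : connect ptrel i j.
Proof.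
apply: (connect_trans (conn_root i)).
by rewrite (sym_connect_sym ptrel_sym); exact: conn_root.
Qed.

Lemma ptrel_acyclic : ~ exists c, 2 < size c /\ uniq c /\ cycle ptrel c.
Proof.
move=> [c [Hs [Hu Hc]]].
have c0 : c != [::] by move: Hs; case: (c).
have [z0 z0c] : exists z, z \in c by move: c0; case: (c) => // z s _; exists z; rewrite mem_head.
pose z := [arg max_(i > z0 | i \in c) dep i].
have [zc zmax] : z \in c /\ forall n, n \in c -> dep n <= dep z.
  rewrite /z; case: arg_maxnP => // i Hi Hmax; split=> // n Hn; exact: Hmax.
have Hnb : forall n, n \in c -> ptrel z n -> n = par z.
  move=> n nc; rewrite /ptrel /= => /orP[/andP[_ /eqP]//|/andP[Hn /eqP Hp]].
  have := dep_par Hn; rewrite Hp; have := zmax n nc; lia.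
case: (rot_to zc) => i w Hrot.
have Hc' : cycle ptrel (z :: w) by rewrite -Hrot rot_cycle.
have Hu' : uniq (z :: w) by rewrite -Hrot rot_uniq.
have Hs' : 2 < size (z :: w) by rewrite -Hrot size_rot.
have memw : forall n, n \in w -> n \in c.
  by move=> n nw; rewrite -(mem_rot i) Hrot inE nw orbT.
clear Hrot; case: w Hc' Hu' Hs' memw => [|n1 [|n2 w']] //= Hc' Hu' _ memw.
move: Hc' => /and3P[H1 _]; rewrite rcons_path => /andP[_ Hl].
have E1 : n1 = par z by apply: Hnb; [apply: memw; rewrite mem_head|].
have El : last n2 w' = par z.
  apply: Hnb; last by rewrite ptrel_sym.
  apply: memw; rewrite inE; apply/orP; right; exact: mem_last.
move: Hu' => /and4P[_ Hn1 _ _].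
by move: Hn1; rewrite E1 -El (mem_last n2 w').
Qed.

Lemma ptrel_tree : is_tree ptrel.
Proof.
split; first exact: ptrel_sym.
split; first exact: ptrel_irr.
split; first by apply/card_gt0P; exists r.
split; first exact: ptrel_conn.
exact: ptrel_acyclic.
Qed.

End ParTree.

Section NormalTree.
Variable G : graph.
Notation V := (vert G).
Notation adj := (@adj G).
Variable r : V.

Definition valid (par : V -> V) (dep : V -> nat) :=
  dep r = 0 /\ forall x, x != r -> dep x = (dep (par x)).+1 /\ adj x (par x).

Definition anc (par : V -> V) (dep : V -> nat) (y z : V) :=
  y \in traject par z (dep z).+1.

Section Valid.
Variables (par : V -> V) (dep : V -> nat).
Hypothesis Hv : valid par dep.

Lemma dep_ind (P : V -> Prop) : P r -> (forall x, x != r -> P (par x) -> P x) -> forall x, P x.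
Proof.
move=> Pr Hs x; move: {2}(dep x) (erefl (dep x)) => n; elim: n x => [|n IH] x Hx.
  case: (eqVneq x r) => [->|Hr] //; by have [] := Hv.2 x Hr; rewrite Hx.
case: (eqVneq x r) => [->|Hr] //; apply: Hs => //; apply: IH.
by have [] := Hv.2 x Hr; rewrite Hx => -[].
Qed.

Lemma traj_rec x : x != r ->
  traject par x (dep x).+1 = x :: traject par (par x) (dep (par x)).+1.
Proof. by move=> Hx; have [-> _] := Hv.2 x Hx. Qed.

Lemma traj_r : traject par r (dep r).+1 = [:: r].
Proof. by rewrite Hv.1. Qed.

Lemma anc_rec y x : x != r -> anc par dep y x = (y == x) || anc par dep y (par x).
Proof. by move=> Hx; rewrite /anc traj_rec // inE. Qed.

Lemma anc_r y : anc par dep y r = (y == r).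
Proof. by rewrite /anc traj_r inE. Qed.

Lemma anc_dep y x : anc par dep y x -> dep y <= dep x.
Proof.
elim/dep_ind: x => [|x Hx IH]; first by rewrite anc_r => /eqP->.
rewrite anc_rec // => /orP[/eqP->//|/IH]; have [-> _] := Hv.2 x Hx; lia.
Qed.

Lemma anc_root x : anc par dep r x.
Proof.
elim/dep_ind: x => [|x Hx IH]; first by rewrite anc_r.
by rewrite anc_rec // IH orbT.
Qed.

Lemma traj_uniq x : uniq (traject par x (dep x).+1).
Proof.
elim/dep_ind: x => [|x Hx IH]; first by rewrite traj_r.
rewrite traj_rec // cons_uniq IH andbT; apply/negP => /anc_dep.
have [-> _] := Hv.2 x Hx; lia.
Qed.

Lemma dep_lt x : dep x < #|V|.
Proof.
have := card_uniqP (traj_uniq x); rewrite size_traject => <-.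
exact: max_card.
Qed.

Lemma root_path x : exists t, [/\ path adj r t, uniq (r :: t), size t = dep x,
   last r t = x & forall y, y \in r :: t -> dep y <= dep x].
Proof.
elim/dep_ind: x => [|x Hx [t [H1 H2 H3 H4 H5]]].
  exists [::]; split=> //; first by rewrite Hv.1.
  by move=> y; rewrite inE => /eqP->.
have [Ed Ha] := Hv.2 x Hx.
exists (rcons t x); split.
- by rewrite rcons_path H1 H4 adj_sym.
- rewrite -rcons_cons rcons_uniq H2 andbT; apply/negP=> /H5; lia.
- by rewrite size_rcons H3 Ed.
- by rewrite last_rcons.
- move=> y; rewrite -rcons_cons mem_rcons inE => /orP[/eqP->//|/H5]; lia.
Qed.

End Valid.

Hypothesis HG : connected G.

Definition reach n x := exists p, [/\ size p = n, path adj r p & last r p = x].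

Lemma valid_exists : exists par dep, valid par dep.
Proof.
pose Q x n := reach n x /\ forall m, reach m x -> n <= m.
have HQ : forall x, exists n, Q x n.
  move=> x; apply: min_ex; case: HG => _ /(_ r x) /connectP [p Hp Hl].
  by exists (size p), p.
pose d x := epsilon (inhabits 0) (Q x).
have Hd : forall x, Q x (d x) by move=> x; apply: epsilon_spec.
have Hpar : forall x, exists y, x != r -> adj x y /\ d x = (d y).+1.
  move=> x; case: (eqVneq x r) => [->|Hx]; first by exists r.
  have [[p [Hs Hp Hl]] Hmin] := Hd x.
  case/lastP: p Hs Hp Hl => [|p y] Hs Hp Hl; first by move: Hx; rewrite -Hl /= eqxx.
  move: Hp Hl; rewrite rcons_path last_rcons => /andP[Hp Ha] Hl; subst y.
  exists (last r p) => _; split; first by rewrite adj_sym.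
  have [Hr1 Hm1] := Hd (last r p).
  have H1 : d (last r p) <= size p by apply: Hm1; exists p.
  have H2 : d x <= (d (last r p)).+1.
    have [q [Hq1 Hq2 Hq3]] := Hr1.
    apply: Hmin; exists (rcons q x); split; first by rewrite size_rcons Hq1.
      by rewrite rcons_path Hq2 Hq3 Ha.
    by rewrite last_rcons.
  move: Hs; rewrite size_rcons; lia.
pose par x := epsilon (inhabits r) (fun y => x != r -> adj x y /\ d x = (d y).+1).
exists par, d; split.
  have [_ Hm] := Hd r; have: d r <= 0 by apply: Hm; exists [::].
  by rewrite leqn0 => /eqP.
move=> x Hx; have [] := epsilon_spec (inhabits r) _ (Hpar x) Hx; by [].
Qed.

Lemma reparent par dep x y : valid par dep -> adj x y ->
  ~~ anc par dep x y -> ~~ anc par dep y x -> dep y <= dep x ->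
  exists par' dep', valid par' dep' /\ \sum_(z : V) dep z < \sum_(z : V) dep' z.
Proof.
move=> Hv Hxy Hn1 Hn2 Hd.
have Hyr : y != r by apply/negP => /eqP E; move: Hn2; rewrite E anc_root.
pose c := (dep x).+1 - dep y.
pose par' z := if z == y then x else par z.
pose dep' z := if anc par dep y z then dep z + c else dep z.
exists par', dep'; split.
  split.
    by rewrite /dep' anc_r // (negbTE Hyr) Hv.1.
  move=> z Hz; rewrite /par'; case: (eqVneq z y) => [->|Hzy].
    rewrite /dep' (negbTE Hn2) /anc mem_head; split; last by rewrite adj_sym.
    rewrite /c; lia.
  have [E Ha] := Hv.2 z Hz; split=> //.
  by rewrite /dep' (anc_rec Hv _ Hz) eq_sym (negbTE Hzy) /=; case: ifP; rewrite E; lia.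
have -> : \sum_(z : V) dep' z = \sum_(z : V) (dep z + (if anc par dep y z then c else 0)).
  by apply: eq_bigr => z _; rewrite /dep'; case: ifP; rewrite ?addn0.
rewrite big_split /= -[X in X < _]addn0 ltn_add2l (bigD1 y) //= /anc mem_head.
rewrite /c; lia.
Qed.

Lemma normal_tree_exists : exists par dep, valid par dep /\
  forall x y, adj x y -> anc par dep x y || anc par dep y x.
Proof.
pose P n := exists par dep, valid par dep /\ \sum_(z : V) dep z = n.
have [n [[par [dep [Hv Hs]]] Hmax]] : exists n, P n /\ forall m, P m -> m <= n.
  apply: (@max_ex _ (#|V| * #|V|)).
    by have [par [dep Hv]] := valid_exists; exists (\sum_(z : V) dep z), par, dep.
  move=> m [par [dep [Hv <-]]].
  apply: (@leq_trans (\sum_(z : V) #|V|)).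
    by apply: leq_sum => z _; apply: ltnW; exact: (dep_lt Hv).
  by rewrite sum_nat_const.
exists par, dep; split=> // x y Hxy.
apply/negPn/negP; rewrite negb_or => /andP[H1 H2].
have Hmx : forall par' dep', valid par' dep' -> ~ \sum_(z : V) dep z < \sum_(z : V) dep' z.
  move=> par' dep' Hv' Hlt; have := Hmax _ (ex_intro _ par' (ex_intro _ dep' (conj Hv' erefl))).
  lia.
case: (leqP (dep y) (dep x)) => Hd.
  have [par' [dep' [Hv' Hlt]]] := reparent Hv Hxy H1 H2 Hd; exact: (Hmx _ _ Hv' Hlt).
have Hd' : dep x <= dep y by lia.
have Hyx : adj y x by rewrite adj_sym.
have [par' [dep' [Hv' Hlt]]] := reparent Hv Hyx H2 H1 Hd'; exact: (Hmx _ _ Hv' Hlt).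
Qed.

End NormalTree.

Lemma normal_decomp (G : graph) (r : vert G) par dep w :
  valid r par dep -> (forall x y, adj x y -> anc par dep x y || anc par dep y x) ->
  (forall x, dep x <= w) -> has_tree_decomp G w.
Proof.
move=> Hv Hn Hw.
exists (vert G), (ptrel r par), (fun x => [set z | anc par dep z x]); split.
- apply: (ptrel_tree (dep := dep)); first exact: Hv.1.
  by move=> x Hx; have [] := Hv.2 x Hx.
- by move=> v; exists v; rewrite inE /anc mem_head.
- move=> u v /Hn /orP[H|H].
    by exists v; rewrite !inE H /anc mem_head.
  by exists u; rewrite !inE H /anc mem_head.
- move=> v i j Hi Hj.
  pose R := [rel x y | ptrel r par x y && (v \in [set z | anc par dep z x])
                                       && (v \in [set z | anc par dep z y])].
  have HR : symmetric R.
    by move=> x y; rewrite /R /= ptrel_sym andbAC.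
  have Hc : forall i, v \in [set z | anc par dep z i] -> connect R i v.
    apply: (dep_ind Hv) => [|x Hx IH].
      by rewrite inE (anc_r Hv) => /eqP->; exact: connect0.
    case: (eqVneq x v) => [->|Hxv]; first by move=> _; exact: connect0.
    move=> Hvx; have Hvp : v \in [set z | anc par dep z (par x)].
      by move: Hvx; rewrite !inE (anc_rec Hv _ Hx) eq_sym (negbTE Hxv).
    apply: (connect_trans (connect1 _) (IH Hvp)).
    by rewrite /R /= Hvx Hvp /ptrel /= Hx eqxx.
  apply: (connect_trans (Hc i Hi)).
  by rewrite (sym_connect_sym HR); apply: Hc.
- move=> x; apply: (@leq_trans (size (traject par x (dep x).+1))).
    by rewrite /anc cardsE; exact: card_size.
  by rewrite size_traject ltnS.
Qed.

Lemma long_path_or_decomp (G : graph) (r : vert G) w : connected G ->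
  has_tree_decomp G w \/ exists t, [/\ path (@adj G) r t, uniq (r :: t) & w < size t].
Proof.
move=> HG; have [par [dep [Hv Hn]]] := normal_tree_exists r HG.
case: (classic (forall x, dep x <= w)) => H.
  by left; exact: (normal_decomp Hv Hn H).
right; have [x Hx] := not_all_ex_not _ _ H.
have [t [H1 H2 H3 _ _]] := root_path Hv x.
by exists t; split=> //; rewrite H3; lia.
Qed.

Lemma connect_mono (T : finType) (e1 e2 : rel T) x y :
  (forall u v, e1 u v -> e2 u v) -> connect e1 x y -> connect e2 x y.
Proof.
move=> H; apply: connect_sub => u v /H; exact: connect1.
Qed.

Lemma connect_uniq (T : finType) (e : rel T) x y :
  connect e x y -> exists2 p, path e x p & uniq (x :: p) /\ y = last x p.
Proof.
move=> /connectP [p Hp ->]; case: (shortenP Hp) => p' H1 H2 _.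
by exists p'.
Qed.

Lemma split_mem (T : eqType) (s : seq T) x : x \in s -> exists u w, s = u ++ x :: w.
Proof.
elim: s => [|y s IH] //; rewrite inE => /orP[/eqP->|/IH [u [w ->]]].
  by exists [::], s.
by exists (y :: u), w.
Qed.

Lemma avoid (T : finType) (e : rel T) l p x y :
  (forall z, e l z -> z = p) -> (forall z, e z l -> z = p) ->
  x != l -> y != l -> connect e x y ->
  connect [rel u v | e u v && (u != l) && (v != l)] x y.
Proof.
move=> H1 H2 Hx Hy /connect_uniq [q Hq [Hu Hl]].
have Hnl : l \notin q.
  apply/negP => Hlq.
  have [u [w E]] := split_mem Hlq.
  subst q; clear Hlq; case: w Hq Hu Hl => [|z w] Hq Hu Hl.
    by move: Hy; rewrite Hl last_cat /= eqxx.
  move: Hq; rewrite cat_path /= => /and3P[_ Ha /andP[Hb _]].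
  have Ez := H1 _ Hb; have Eu := H2 _ Ha.
  move: Hu; rewrite -cat_cons cat_uniq => /and3P[_ Hh _].
  move: Hh; apply/negP; rewrite negbK; apply/hasP; exists z.
    by rewrite !inE eqxx orbT.
  by rewrite Ez -Eu mem_last.
apply/connectP; exists q => //.
elim: q x Hx Hq Hnl {Hu Hl} => [|z q IH] x Hx //=.
rewrite inE negb_or => /andP[Hxz Hq] /andP[Hzl Hnl].
rewrite Hxz Hx eq_sym Hzl /=; apply: IH => //; by rewrite eq_sym.
Qed.

Section Core.
Variables (G : graph) (I : finType) (t : rel I) (B : I -> {set vert G}) (S : {set vert G}).
Hypotheses (tsym : symmetric t) (tirr : irreflexive t)
  (tacyc : ~ exists c, 2 < size c /\ uniq c /\ cycle t c).

Definition tJ (J : {set I}) := [rel x y | t x y && (x \in J) && (y \in J)].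

Definition good (J : {set I}) := [/\ exists i, i \in J,
  forall i j, i \in J -> j \in J -> connect (tJ J) i j,
  forall v, v \in S -> exists2 i, i \in J & v \in B i,
  forall u v, u \in S -> v \in S -> adj u v -> exists2 i, i \in J & (u \in B i) && (v \in B i)
  & forall v i j, v \in S -> i \in J -> j \in J -> v \in B i -> v \in B j ->
      connect [rel x y | tJ J x y && (v \in B x) && (v \in B y)] i j].

Lemma leaf (J : {set I}) : (forall i j, i \in J -> j \in J -> connect (tJ J) i j) -> 1 < #|J| ->
  exists l p, [/\ l \in J, p \in J, t l p & forall q, q \in J -> t l q -> q = p].
Proof.
move=> Hc HJ.
pose P n := exists x s, [/\ x \in J, all (mem J) s, path t x s, uniq (x :: s) & size s = n].
have [n [[x [s [Hx Hs Hp Hu Hn]]] Hmax]] : exists n, P n /\ forall m, P m -> m <= n.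
  apply: (@max_ex _ #|I|).
    have [i Hi] : exists i, i \in J by apply/set0Pn; rewrite -card_gt0; lia.
    by exists 0, i, [::].
  move=> m [x [s [_ _ _ Hu <-]]]; have H1 := card_uniqP Hu.
  have H2 : #|x :: s| <= #|I| by apply: max_card.
  rewrite H1 /= in H2; exact: ltnW.
have n1 : 0 < n.
  have [i [j [Hi Hj Hij]]] : exists i j, [/\ i \in J, j \in J & i != j].
    have [i Hi] : exists i, i \in J by apply/set0Pn; rewrite -card_gt0; lia.
    have : 0 < #|J :\ i| by move: HJ; rewrite (cardsD1 i) Hi; lia.
    rewrite card_gt0 => /set0Pn [j]; rewrite !inE => /andP[Hji Hj].
    by exists i, j; rewrite eq_sym.
  have /connectP [q Hq El] := Hc _ _ Hi Hj.
  case: q Hq El => [|k q] /=; first by move=> _ E; move: Hij; rewrite E eqxx.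
  move=> /andP[/andP[/andP[Hik _] Hk] _] _.
  apply: Hmax; exists i, [:: k]; split=> //=; rewrite ?Hk ?Hik //.
  by rewrite inE andbT; apply/negP => /eqP E; move: Hik; rewrite E tirr.
case/lastP: s Hs Hp Hu Hn => [|s' l] Hs Hp Hu Hn; first by move: n1; rewrite -Hn.
move: Hp; rewrite rcons_path => /andP[Hp Hlp].
move: Hs; rewrite all_rcons => /andP[Hl Hs'].
have HpJ : last x s' \in J.
  case: (lastP s') Hs' => [|s'' z] //= Hs'; rewrite last_rcons.
  by move: Hs'; rewrite all_rcons => /andP[].
exists l, (last x s'); split=> //; first by rewrite tsym.
move=> q Hq Hlq; apply/eqP/negPn/negP => Hqp.
case Hin : (q \in x :: rcons s' l).
- have Hql : q != l by apply/negP => /eqP E; move: Hlq; rewrite E tirr.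
  have Hq' : q \in x :: s'.
    by move: Hin; rewrite -rcons_cons mem_rcons inE (negbTE Hql).
  have [u [w E]] := split_mem Hq'.
  have Hsort : sorted t (u ++ q :: rcons w l).
    by rewrite -rcons_cons -rcons_cat -E rcons_cons /= rcons_path Hp Hlp.
  have Hun : uniq (u ++ q :: rcons w l).
    by rewrite -rcons_cons -rcons_cat -E rcons_cons.
  move: Hsort; rewrite sorted_cat_cons => /andP[_ Hpq].
  apply: tacyc; exists (q :: rcons w l); split; last split.
  + case: w E Hpq Hun => [|w0 w] E Hpq Hun; last by rewrite /= size_rcons.
    exfalso; have El : last x s' = last x (u ++ [:: q]) by rewrite -E.
    by move: Hqp; rewrite El last_cat /= eqxx.
  + by move: Hun; rewrite cat_uniq => /and3P[].
  + by rewrite /= rcons_path Hpq last_rcons.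
- have : n.+1 <= n; last by rewrite ltnn.
  apply: Hmax; exists x, (rcons (rcons s' l) q); split=> //.
  + rewrite !all_rcons Hs' Hl /=; by rewrite Hq.
  + by rewrite rcons_path rcons_path Hp Hlp last_rcons Hlq.
  + by rewrite -rcons_cons rcons_uniq Hin Hu.
  + by rewrite size_rcons Hn.
Qed.

Lemma core n (J : {set I}) : #|J| <= n -> good J -> S != set0 ->
  exists2 v, v \in S & exists2 i, i \in J & forall u, u \in S -> (u == v) || adj v u -> u \in B i.
Proof.
elim: n J => [|n IH] J HJn [[i0 Hi0] Hc Hcov Hedge Hsub] HS.
  by move: HJn; rewrite leqn0 cards_eq0 => /eqP E; move: Hi0; rewrite E inE.
case: (leqP #|J| 1) => HJ1.
  have Eq : forall j, j \in J -> j = i0.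
    move=> j Hj; apply/eqP/negPn/negP => Hne.
    have : 1 < #|J|; last lia.
    by rewrite (cardsD1 i0) Hi0 ltnS card_gt0; apply/set0Pn; exists j; rewrite !inE Hne.
  have [v Hv] := set0Pn _ HS.
  exists v => //; exists i0 => // u Hu /orP[/eqP->|Ha].
    by have [j Hj Hvj] := Hcov v Hv; rewrite -(Eq j Hj).
  have [j Hj /andP[_ Huj]] := Hedge v u Hv Hu Ha; by rewrite -(Eq j Hj).
have [l [p [Hl Hp Hlp Huniq]]] := leaf Hc HJ1.
case: (classic (exists2 v, v \in S & (v \in B l) /\ forall j, j \in J -> v \in B j -> j = l)) => [[v Hv [Hvl Honly]]|HB].
  exists v => //; exists l => // u Hu /orP[/eqP->//|Ha].
  have [j Hj /andP[Hvj Huj]] := Hedge v u Hv Hu Ha; by rewrite -(Honly j Hj Hvj).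
have Hpl : p != l by apply/negP => /eqP E; move: Hlp; rewrite E tirr.
have HBp : forall v, v \in S -> v \in B l -> v \in B p.
  move=> v Hv Hvl.
  have [j [Hj Hvj Hjl]] : exists j, [/\ j \in J, v \in B j & j != l].
    apply: NNPP => Hn; apply: HB; exists v => //; split=> // j Hj Hvj.
    apply/eqP/negPn/negP => Hjl; apply: Hn; by exists j.
  have /connectP [q Hq El] := Hsub v l j Hv Hl Hj Hvl Hvj.
  case: q Hq El => [|k q] /=; first by move=> _ E; move: Hjl; rewrite E eqxx.
  move=> /andP[/andP[/andP[/andP[/andP[Hlk _] Hk] _] Hvk] _] _.
  by rewrite -(Huniq k Hk Hlk).
pose J' := J :\ l.
have HJ'J : forall j, j \in J' -> j \in J by move=> j; rewrite !inE => /andP[].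
have Hsub' : forall j, j \in J -> j != l -> j \in J' by move=> j Hj Hjl; rewrite !inE Hj Hjl.
have HpJ' : p \in J' by exact: Hsub'.
have Hgood : good J'.
  split.
  - by exists p.
  - move=> i j Hi Hj.
    have := avoid (e := tJ J) (l := l) (p := p) _ _ _ _ (Hc i j (HJ'J i Hi) (HJ'J j Hj)).
    move=> /(_ _ _ _ _) H; apply: connect_mono (H _ _ _ _).
    + by move=> u v /= /andP[/andP[/andP[/andP[Huv Hu] Hv] Hul] Hvl]; rewrite Huv !Hsub'.
    + by move=> z /= /andP[/andP[Hz _] HzJ]; exact: Huniq.
    + by move=> z /= /andP[/andP[Hz HzJ] _]; apply: Huniq => //; rewrite tsym.
    + by move: Hi; rewrite !inE => /andP[].
    + by move: Hj; rewrite !inE => /andP[].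
  - move=> v Hv; have [i Hi Hvi] := Hcov v Hv.
    case: (eqVneq i l) => [E|Hil]; last by exists i => //; exact: Hsub'.
    by exists p => //; apply: HBp => //; rewrite -E.
  - move=> u v Hu Hv Ha; have [i Hi /andP[Hui Hvi]] := Hedge u v Hu Hv Ha.
    case: (eqVneq i l) => [E|Hil]; last by exists i => //; [exact: Hsub' | rewrite Hui Hvi].
    by exists p => //; rewrite !HBp // -E.
  - move=> v i j Hv Hi Hj Hvi Hvj.
    have := avoid (e := [rel x y | tJ J x y && (v \in B x) && (v \in B y)]) (l := l) (p := p) _ _ _ _
      (Hsub v i j Hv (HJ'J i Hi) (HJ'J j Hj) Hvi Hvj).
    move=> /(_ _ _ _ _) H; apply: connect_mono (H _ _ _ _).
    + move=> x y /= /andP[/andP[/andP[/andP[/andP[/andP[Hxy Hx] Hy] Hvx] Hvy] Hxl] Hyl].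
      by rewrite Hxy !Hsub' // Hvx Hvy.
    + by move=> z /= /andP[/andP[/andP[/andP[Hz _] HzJ] _] _]; exact: Huniq.
    + by move=> z /= /andP[/andP[/andP[/andP[Hz HzJ] _] _] _]; apply: Huniq => //; rewrite tsym.
    + by move: Hi; rewrite !inE => /andP[].
    + by move: Hj; rewrite !inE => /andP[].
have HJ' : #|J'| <= n by move: HJn; rewrite (cardsD1 l J) Hl.
have [v Hv [i Hi Hi']] := IH J' HJ' Hgood HS.
by exists v => //; exists i => //; exact: HJ'J.
Qed.

End Core.

Lemma bag_nbhd (G : graph) w (S : {set vert G}) d :
  has_tree_decomp G w -> S != set0 ->
  (forall v, v \in S -> d <= #|[set u in S | adj v u]|) -> d <= w.
Proof.
move=> [I [t [B [[tsym [tirr [tI [tc tacyc]]]] Hcov Hedge Hsub Hsz]]]] HS Hd.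
have Hg : good t B S setT.
  split.
  - by case/card_gt0P: tI => i _; exists i; rewrite inE.
  - move=> i j _ _; apply: connect_mono (tc i j) => u v /= ->; by rewrite !inE.
  - by move=> v _; have [i Hi] := Hcov v; exists i; rewrite ?inE.
  - by move=> u v _ _ /Hedge [i Hi]; exists i; rewrite ?inE.
  - move=> v i j _ _ _ Hvi Hvj; apply: connect_mono (Hsub v i j Hvi Hvj).
    by move=> x y /= /andP[/andP[-> ->] ->]; rewrite !inE.
have [v Hv [i _ Hi]] := core tsym tirr tacyc (leqnn _) Hg HS.
have Hsubs : v |: [set u in S | adj v u] \subset B i.
  apply/subsetP => u; rewrite !inE => /orP[/eqP->|/andP[Hu Ha]].
    by apply: Hi => //; rewrite eqxx.
  by apply: Hi => //; rewrite Ha orbT.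
have := subset_leq_card Hsubs; rewrite cardsU1 inE adj_irr andbF /=.
have := Hsz i; have := Hd v Hv; lia.
Qed.

Definition mp_adj (m N : nat) : rel ('I_m * 'I_N) := fun x y => x.1 != y.1.
Lemma mp_sym m N : symmetric (@mp_adj m N).
Proof. by move=> x y; rewrite /mp_adj eq_sym. Qed.
Lemma mp_irr m N : irreflexive (@mp_adj m N).
Proof. by move=> x; rewrite /mp_adj eqxx. Qed.
Definition mp m N : graph := Graph (@mp_sym m N) (@mp_irr m N).

Lemma sat_ext (G : graph) f (s s' : nat -> vert G) :
  (forall n, s n = s' n) -> (sat s f <-> sat s' f).
Proof.
elim: f s s' => [x y|x y|g IH|g IHg h IHh|g IHg h IHh|x g IH|x g IH] s s' E /=.
- by rewrite !E.
- by rewrite !E.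
- by rewrite (IH s s' E).
- by rewrite (IHg s s' E) (IHh s s' E).
- by rewrite (IHg s s' E) (IHh s s' E).
- split=> [[v Hv]|[v Hv]]; exists v; move: Hv; apply IH => n; rewrite /upd; case: ifP => // _; exact: E.
- split=> Hv v; move: (Hv v); apply IH => n; rewrite /upd; case: ifP => // _; exact: E.
Qed.

Lemma size_undup_sub (T : eqType) (A B : seq T) :
  {subset A <= B} -> size (undup A) <= size (undup B).
Proof.
move=> H; apply: uniq_leq_size; first exact: undup_uniq.
by move=> x; rewrite !mem_undup; exact: H.
Qed.

Lemma fresh (T : finType) (l : seq T) : size l < #|T| -> exists x, x \notin l.
Proof.
move=> H; apply: NNPP => Hn.
have : #|T| <= size l; last lia.
apply: (@leq_trans #|l|); last exact: card_size.
apply: subset_leq_card; apply/subsetP => x _; apply: NNPP => Hx; apply: Hn; exists x.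
by apply/negP.
Qed.

Section EF.
Variables (m1 m2 N : nat).
Notation G1 := (mp m1 N).
Notation G2 := (mp m2 N).

Definition einv (X : seq nat) (s : nat -> vert G1) (t : nat -> vert G2) :=
  forall y z, y \in X -> z \in X ->
    ((s y == s z) = (t y == t z)) /\ (((s y).1 == (s z).1) = ((t y).1 == (t z).1)).

Lemma inv_sub X X' s t : einv X s t -> {subset X' <= X} -> einv X' s t.
Proof. by move=> H Hs y z Hy Hz; apply: H; apply: Hs. Qed.

Lemma ext X s t x v : einv X s t -> size (undup X) < m2 -> size (undup X) < N ->
  x \notin X -> exists w, einv (x :: X) (upd s x v) (upd t x w).
Proof.
move=> Hi Hm HN Hx.
have Hupd : forall (T : Type) (f : nat -> T) a z, z \in X -> upd f x a z = f z.
  by move=> T f a z Hz; rewrite /upd; case: eqP => // E; move: Hx; rewrite -E Hz.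
have Hupx : forall (T : Type) (f : nat -> T) a, upd f x a x = a.
  by move=> T f a; rewrite /upd eqxx.
suff [w Hw] : exists w : vert G2, forall z, z \in X ->
    ((v == s z) = (w == t z)) /\ ((v.1 == (s z).1) = (w.1 == (t z).1)).
  exists w => y z; rewrite !inE => /orP[/eqP->|Hy] /orP[/eqP->|Hz].
  - by rewrite !Hupx !eqxx.
  - by rewrite !Hupx !Hupd //; exact: Hw.
  - by rewrite !Hupx !Hupd // ![_ == v]eq_sym ![_ == w]eq_sym ![_ == v.1]eq_sym
        ![_ == w.1]eq_sym; exact: Hw.
  - by rewrite !Hupd //; exact: Hi.
case: (classic (exists2 y, y \in X & s y = v)) => [[y Hy Ey]|H1].
  exists (t y) => z Hz; rewrite -Ey; exact: Hi.
have Hne : forall z, z \in X -> (v == s z) = false.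
  by move=> z Hz; apply/eqP => E; apply: H1; exists z; rewrite // E.
case: (classic (exists2 y, y \in X & (s y).1 = v.1)) => [[y Hy Ey]|H2].
  have [j Hj] : exists j : 'I_N, j \notin [seq (t z).2 | z <- undup X].
    by apply: fresh; rewrite size_map card_ord.
  exists ((t y).1, j) => z Hz; rewrite Hne //; split.
    apply/esym/eqP => E; have /= Ej := congr1 snd E; move: Hj; rewrite Ej; apply/negP/negPn.
    by apply/mapP; exists z; rewrite ?mem_undup.
  by rewrite -Ey /=; have [] := Hi y z Hy Hz.
have [p Hp] : exists p : 'I_m2, p \notin [seq (t z).1 | z <- undup X].
  by apply: fresh; rewrite size_map card_ord.
have [j0 _] : exists j : 'I_N, true.
  by move: HN; case: N => [|n] HN; [rewrite ltn0 in HN | exists ord0].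
exists (p, j0) => z Hz; rewrite Hne //.
have Hpz : (p == (t z).1) = false.
  apply/eqP => E; move: Hp; rewrite E; apply/negP/negPn.
  by apply/mapP; exists z; rewrite ?mem_undup.
have Hvz : (v.1 == (s z).1) = false.
  by apply/eqP => E; apply: H2; exists z.
split; last by rewrite /= Hpz Hvz.
by apply/esym/eqP => E; move: Hpz; rewrite -E eqxx.
Qed.

End EF.

Lemma inv_sym m1 m2 N X s t : @einv m1 m2 N X s t -> @einv m2 m1 N X t s.
Proof. by move=> H y z Hy Hz; have [-> ->] := H y z Hy Hz. Qed.

Section EFmain.
Variables (m N : nat).
Hypothesis mN : m <= N.

Lemma quant x g X (s : nat -> vert (mp m N)) (t : nat -> vert (mp m.+1 N)) :
  {subset filter (predC1 x) (fv g) <= X} -> einv X s t ->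
  (size (undup X) + (qdepth g).+1 <= m \/ size (undup (X ++ x :: vars g)) <= m) ->
  exists Y, [/\ {subset fv g <= x :: Y},
    (size (undup (x :: Y)) + qdepth g <= m \/ size (undup ((x :: Y) ++ vars g)) <= m),
    forall v, exists w, einv (x :: Y) (upd s x v) (upd t x w) &
    forall w, exists v, einv (x :: Y) (upd s x v) (upd t x w)].
Proof.
move=> Hfv Hi Hc.
pose Y := [seq z <- X | z != x].
have HxY : x \notin Y by rewrite mem_filter eqxx.
have HYX : {subset Y <= X} by move=> z; rewrite mem_filter => /andP[].
have HiY : einv Y s t by apply: inv_sub Hi HYX.
have HYmem : forall z, (z \in Y) = (z \in X) && (z != x) by move=> z; rewrite mem_filter andbC.
clearbody Y.
have HYm : size (undup Y) < m.
  case: Hc => Hc; first by have := size_undup_sub HYX; move: Hc; lia.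
  have : size (undup (x :: Y)) <= size (undup (X ++ x :: vars g)).
    apply: size_undup_sub => z; rewrite inE mem_cat => /orP[/eqP->|/HYX ->];
      by rewrite ?inE ?eqxx ?orbT.
  by move: Hc; rewrite /= (negbTE HxY) /=; lia.
exists Y; split.
- move=> z Hz; rewrite inE; case: (eqVneq z x) => //= Hzx.
  by rewrite HYmem Hzx andbT; apply: Hfv; rewrite mem_filter /= Hzx.
- case: Hc => Hc.
    left; rewrite /= (negbTE HxY) /=; apply: leq_trans Hc.
    by rewrite addSn addnS ltnS leq_add2r; exact: size_undup_sub HYX.
  right; apply: leq_trans Hc; apply: size_undup_sub => z.
  rewrite cat_cons inE mem_cat mem_cat inE => /orP[/eqP->|/orP[/HYX->|->]]; by rewrite ?eqxx ?orbT.
- by move=> v; apply: ext => //; lia.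
- move=> w; have [v Hv] := @ext m.+1 m N Y t s x w (inv_sym HiY) HYm (leq_trans HYm mN) HxY.
  by exists v; apply: inv_sym.
Qed.

Lemma ef_sat f : forall X (s : nat -> vert (mp m N)) (t : nat -> vert (mp m.+1 N)),
  {subset fv f <= X} -> einv X s t ->
  (size (undup X) + qdepth f <= m \/ size (undup (X ++ vars f)) <= m) ->
  (sat s f <-> sat t f).
Proof.
elim: f => [x y|x y|g IH|g IHg h IHh|g IHg h IHh|x g IH|x g IH] X s t Hfv Hi Hc /=.
- have Hx : x \in X by apply: Hfv; rewrite inE eqxx.
  have Hy : y \in X by apply: Hfv; rewrite !inE eqxx orbT.
  by have [_ E] := Hi x y Hx Hy; rewrite /mp_adj E.
- have Hx : x \in X by apply: Hfv; rewrite inE eqxx.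
  have Hy : y \in X by apply: Hfv; rewrite !inE eqxx orbT.
  by have [E _] := Hi x y Hx Hy; split=> /eqP H; apply/eqP; [rewrite -E | rewrite E].
- by rewrite (IH X s t Hfv Hi Hc).
- have H1 : {subset fv g <= X} by move=> z Hz; apply: Hfv; rewrite mem_cat Hz.
  have H2 : {subset fv h <= X} by move=> z Hz; apply: Hfv; rewrite mem_cat Hz orbT.
  have Hsg : {subset X ++ vars g <= X ++ vars (FAnd g h)}.
    by move=> z; rewrite /= !mem_cat => /orP[->|->]; rewrite ?orbT.
  have Hsh : {subset X ++ vars h <= X ++ vars (FAnd g h)}.
    by move=> z; rewrite /= !mem_cat => /orP[->|->]; rewrite ?orbT.
  rewrite (IHg X s t H1 Hi) ?(IHh X s t H2 Hi) //.
    case: Hc => Hc; [left | right; apply: leq_trans Hc; exact: size_undup_sub].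
    by move: Hc => /=; lia.
  case: Hc => Hc; [left | right; apply: leq_trans Hc; exact: size_undup_sub].
  by move: Hc => /=; lia.
- have H1 : {subset fv g <= X} by move=> z Hz; apply: Hfv; rewrite mem_cat Hz.
  have H2 : {subset fv h <= X} by move=> z Hz; apply: Hfv; rewrite mem_cat Hz orbT.
  have Hsg : {subset X ++ vars g <= X ++ vars (FOr g h)}.
    by move=> z; rewrite /= !mem_cat => /orP[->|->]; rewrite ?orbT.
  have Hsh : {subset X ++ vars h <= X ++ vars (FOr g h)}.
    by move=> z; rewrite /= !mem_cat => /orP[->|->]; rewrite ?orbT.
  rewrite (IHg X s t H1 Hi) ?(IHh X s t H2 Hi) //.
    case: Hc => Hc; [left | right; apply: leq_trans Hc; exact: size_undup_sub].
    by move: Hc => /=; lia.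
  case: Hc => Hc; [left | right; apply: leq_trans Hc; exact: size_undup_sub].
  by move: Hc => /=; lia.
- have [Y [HX' HC' K1 K2]] := quant Hfv Hi Hc.
  split=> [[v Hv]|[w Hw]].
    have [w Hw] := K1 v; exists w; exact/(IH _ _ _ HX' Hw HC').
  have [v Hv] := K2 w; exists v; exact/(IH _ _ _ HX' Hv HC').
- have [Y [HX' HC' K1 K2]] := quant Hfv Hi Hc.
  split=> H v.
    have [w Hw] := K2 v; exact/(IH _ _ _ HX' Hw HC').
  have [w Hw] := K1 v; exact/(IH _ _ _ HX' Hw HC').
Qed.

End EFmain.

Lemma ef_models m N f : 0 < m -> m <= N -> sentence f -> (qdepth f <= m \/ vwidth f <= m) ->
  (models (mp m N) f <-> models (mp m.+1 N) f).
Proof.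
move=> m0 mN Hs Hc.
have N0 : 0 < N by lia.
have v1 : vert (mp m N) by exact: (Ordinal m0, Ordinal N0).
have v2 : vert (mp m.+1 N) by exact: (ord0, Ordinal N0).
have Hfv : {subset fv f <= [::] : seq nat} by rewrite Hs.
have Hc' : size (undup ([::] : seq nat)) + qdepth f <= m \/ size (undup (([::] : seq nat) ++ vars f)) <= m by [].
have Hi : forall s t, @einv m m.+1 N [::] s t by move=> s t y z; rewrite in_nil.
split=> H s.
  exact: (proj1 (ef_sat mN (X := [::]) (s := fun _ => v1) (t := s) Hfv (Hi _ _) Hc') (H _)).
exact: (proj2 (ef_sat mN (X := [::]) (s := s) (t := fun _ => v2) Hfv (Hi _ _) Hc') (H _)).
Qed.

Definition pairs a := [seq (i, j) | i <- iota 0 a, j <- [seq j <- iota 0 a | j != i]].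
Definition conjl (l : seq (nat * nat)) := foldr (fun pr f => FAnd (FAdj pr.1 pr.2) f) (FEq 0 0) l.
Definition clique_f a := foldr FEx (conjl (pairs a)) (iota 0 a).

Lemma mem_pairs a i j : ((i, j) \in pairs a) = [&& i < a, j < a & j != i].
Proof.
apply/allpairsPdep/idP => [[x [y [Hx Hy [-> ->]]]]|/and3P[Hi Hj Hji]].
  move: Hx Hy; rewrite mem_filter !mem_iota /= !add0n => -> /andP[-> ->]; done.
by exists i, j; rewrite mem_filter !mem_iota /= !add0n Hi Hj Hji.
Qed.

Lemma sat_conjl (G : graph) (s : nat -> vert G) l :
  sat s (conjl l) <-> forall pr, pr \in l -> adj (s pr.1) (s pr.2).
Proof.
elim: l => [|pr l IH] /=; first by split.
rewrite IH; split=> [[H1 H2] q|H]; first by rewrite inE => /orP[/eqP->|/H2].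
by split=> [|q Hq]; apply: H; rewrite inE ?eqxx ?Hq ?orbT.
Qed.

Lemma sat_ext1 (G : graph) f (s s' : nat -> vert G) :
  (forall n, s n = s' n) -> sat s f -> sat s' f.
Proof. by move=> E; apply (sat_ext f E).1. Qed.

Lemma sat_exs (G : graph) (s : nat -> vert G) f l :
  sat s (foldr FEx f l) <-> exists g, sat (fun n => if n \in l then g n else s n) f.
Proof.
elim: l s => [|x l IH] s /=.
  split=> [H|[g H]]; [exists s | ]; move: H; apply: sat_ext1 => n //.
split=> [[v /IH [g Hg]]|[g Hg]].
  exists (fun y => if y \in l then g y else v); move: Hg; apply: sat_ext1 => n.
  rewrite inE /upd; case: (eqVneq n x) => [->|Hn] /=; case: ifP => //.
exists (g x); apply/IH; exists g; move: Hg; apply: sat_ext1 => n.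
rewrite inE /upd; case: (eqVneq n x) => [->|Hn] /=; case: ifP => //.
Qed.

Lemma qdepth_exs f l : qdepth (foldr FEx f l) = size l + qdepth f.
Proof. by elim: l => //= x l ->. Qed.

Lemma vars_exs f l : vars (foldr FEx f l) = l ++ vars f.
Proof. by elim: l => //= x l ->. Qed.

Lemma fv_exs f l : fv (foldr FEx f l) = [seq n <- fv f | n \notin l].
Proof.
elim: l => [|x l IH] /=; first by rewrite filter_predT.
rewrite IH -filter_predI; apply: eq_filter => n /=; by rewrite inE negb_or andbC.
Qed.

Lemma qdepth_conjl l : qdepth (conjl l) = 0.
Proof. by elim: l => //= pr l ->. Qed.

Lemma vars_conjl a : 0 < a -> {subset vars (conjl (pairs a)) <= iota 0 a}.
Proof.
move=> a0; have : forall pr, pr \in pairs a -> (pr.1 < a) && (pr.2 < a).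
  by move=> [i j]; rewrite mem_pairs => /and3P[-> -> _].
elim: (pairs a) => [|[i j] l IH] H /= z.
  by rewrite !inE orbb => /eqP->; rewrite mem_iota.
rewrite !inE => /or3P[/eqP->|/eqP->|Hz].
- by have /andP[Hi _] := H (i, j) (mem_head _ _); rewrite mem_iota.
- by have /andP[_ Hj] := H (i, j) (mem_head _ _); rewrite mem_iota.
- by apply: IH => // pr Hpr; apply: H; rewrite inE Hpr orbT.
Qed.

Lemma fv_conjl l : fv (conjl l) = vars (conjl l).
Proof. by elim: l => //= pr l ->. Qed.

Lemma clique_sentence a : 0 < a -> sentence (clique_f a).
Proof.
move=> a0; rewrite /sentence /clique_f fv_exs fv_conjl.
apply/eqP; rewrite -[_ == [::]]negbK -has_filter; apply/hasPn => z Hz /=.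
by rewrite (vars_conjl a0 Hz).
Qed.

Lemma clique_qdepth a : qdepth (clique_f a) = a.
Proof. by rewrite /clique_f qdepth_exs qdepth_conjl size_iota addn0. Qed.

Lemma clique_vwidth a : 0 < a -> vwidth (clique_f a) = a.
Proof.
move=> a0; rewrite /vwidth /clique_f vars_exs.
have -> : size (undup (iota 0 a ++ vars (conjl (pairs a)))) = size (undup (iota 0 a)).
  apply: perm_size; apply: uniq_perm; rewrite ?undup_uniq // => z.
  rewrite !mem_undup mem_cat; case Hz: (z \in vars _); last by rewrite orbF.
  by rewrite (vars_conjl a0 Hz).
by rewrite undup_id ?iota_uniq // size_iota.
Qed.

Lemma models_clique (G : graph) a (x0 : vert G) : 0 < a ->
  models G (clique_f a) <-> exists f : 'I_a -> vert G, forall i j, i != j -> adj (f i) (f j).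
Proof.
move=> a0; split.
  move=> /(_ (fun _ => x0)) /sat_exs [g /sat_conjl H].
  exists (fun i => g i) => i j Hij.
  have Hp : (val i, val j) \in pairs a by rewrite mem_pairs !ltn_ord /= eq_sym.
  by have := H _ Hp; rewrite /= !mem_iota !add0n !ltn_ord.
move=> [f Hf] s; apply/sat_exs.
pose i0 : 'I_a := Ordinal a0.
exists (fun n => f (insubd i0 n)); apply/sat_conjl => [[i j]].
rewrite mem_pairs /= => /and3P[Hi Hj Hji].
rewrite !mem_iota !add0n Hi Hj; apply: Hf.
apply/negP => /eqP /(congr1 val); rewrite !val_insubd Hi Hj => E.
by move: Hji; rewrite E eqxx.
Qed.

Lemma predlt a : 0 < a -> a.-1 < a.
Proof. by rewrite ltn_predL. Qed.

Lemma embed_lol (G : graph) a b (f : 'I_a -> vert G) (q : vert G) (p : seq (vert G)) (a0 : 0 < a) :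
  (forall i j, i != j -> adj (f i) (f j)) ->
  f (Ordinal (predlt a0)) = q ->
  size p = b -> uniq p -> path (@adj G) q p -> (forall x, x \in p -> forall i, x != f i) ->
  subgraph (lollipop a b) G.
Proof.
move=> Hf Hq Hs Hu Hp Hd.
pose i0 : 'I_a := Ordinal a0.
pose g (u : 'I_(a + b)) := if nat_of_ord u < a then f (insubd i0 (nat_of_ord u)) else nth q p (nat_of_ord u - a).
have Hfinj : forall i j, f i = f j -> i = j.
  move=> i j E; apply/eqP/negPn/negP => /Hf; rewrite E adj_irr; by [].
have Hqa : forall u : 'I_(a + b), nat_of_ord u = a.-1 -> g u = q.
  move=> u Hu'; rewrite /g Hu' (predlt a0) -Hq; congr f; apply: val_inj.
  by rewrite val_insubd (predlt a0).
exists g; split.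
  move=> u v; rewrite /g; case: (ltnP (nat_of_ord u) a) => Hua; case: (ltnP (nat_of_ord v) a) => Hva.
  - move=> /Hfinj /(congr1 val); rewrite !val_insubd Hua Hva => E; exact: val_inj.
  - move=> E; exfalso; have Hm : nth q p (nat_of_ord v - a) \in p by apply: mem_nth; rewrite Hs; have := ltn_ord v; lia.
    by move: (Hd _ Hm (insubd i0 (nat_of_ord u))); rewrite E eqxx.
  - move=> E; exfalso; have Hm : nth q p (nat_of_ord u - a) \in p by apply: mem_nth; rewrite Hs; have := ltn_ord u; lia.
    by move: (Hd _ Hm (insubd i0 (nat_of_ord v))); rewrite E eqxx.
  - move=> E.
    have H1 : nat_of_ord u - a < size p by rewrite Hs; have := ltn_ord u; lia.
    have H2 : nat_of_ord v - a < size p by rewrite Hs; have := ltn_ord v; lia.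
    have E2 : nat_of_ord u - a = nat_of_ord v - a.
      by apply/eqP; rewrite -(nth_uniq q H1 H2 Hu) E.
    apply: val_inj; rewrite /=; lia.
have Hstep : forall k, k < b -> adj (nth q (q :: p) k) (nth q p k).
  by move=> k Hk; move: Hp => /(pathP q) H; apply: H; rewrite Hs.
have Hedge : forall u v : 'I_(a + b), nat_of_ord u + 1 = nat_of_ord v -> a <= nat_of_ord v -> adj (g u) (g v).
  move=> u v Huv Hav.
  have Hk : nat_of_ord v - a < b by have := ltn_ord v; lia.
  have -> : g v = nth q p (nat_of_ord v - a) by rewrite /g ltnNge Hav.
  have -> : g u = nth q (q :: p) (nat_of_ord v - a).
    case: (ltnP (nat_of_ord u) a) => Hua.
      rewrite Hqa; last lia.
      by have -> : nat_of_ord v - a = 0 by lia.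
    rewrite /g ltnNge Hua /=.
    have -> : nat_of_ord v - a = (nat_of_ord u - a).+1 by lia.
    by [].
  exact: Hstep.
move=> u v; rewrite /= /lol_adj => /andP[Huv /orP[/orP[/andP[Hua Hva]|/andP[/eqP H1 H2]]|/andP[/eqP H1 H2]]].
- rewrite /g Hua Hva; apply: Hf; apply/negP => /eqP /(congr1 val); rewrite !val_insubd Hua Hva.
  by move=> E; move: Huv; rewrite (val_inj E) eqxx.
- apply: Hedge => //; lia.
- rewrite adj_sym; apply: Hedge => //; lia.
Qed.

Lemma greedy (G : graph) a b (f : 'I_a -> vert G) (q : vert G) :
  (forall v : vert G, a + b <= #|[set u | adj v u]|) ->
  forall n, n <= b -> exists p, [/\ size p = n, uniq p, path (@adj G) q p &
     forall x, x \in p -> forall i, x != f i].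
Proof.
move=> Hdeg; elim=> [|n IH] Hn; first by exists [::].
have [p [Hs Hu Hp Hd]] := IH (ltnW Hn).
pose w := last q p.
pose L := [seq f i | i <- enum 'I_a] ++ p.
have [z Hz] : exists z, (z \in [set u | adj w u]) && (z \notin L).
  apply: NNPP => Hno.
  have : #|[set u | adj w u]| <= size L.
    apply: (@leq_trans #|L|); last exact: card_size.
    apply: subset_leq_card; apply/subsetP => z Hz; apply: NNPP => HzL; apply: Hno.
    by exists z; rewrite Hz; apply/negP.
  rewrite size_cat size_map size_enum_ord Hs; have := Hdeg w; lia.
move: Hz => /andP[]; rewrite inE => Haz; rewrite mem_cat negb_or => /andP[Hzf Hzp].
exists (rcons p z); split.
- by rewrite size_rcons Hs.
- by rewrite rcons_uniq Hzp Hu.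
- by rewrite rcons_path Hp Haz.
- move=> x; rewrite mem_rcons inE => /orP[/eqP-> i|/Hd //].
  apply/negP => /eqP E; move: Hzf; rewrite E; apply/negP/negPn.
  by apply/mapP; exists i; rewrite ?mem_enum.
Qed.

Lemma kconn_deg (G : graph) k : k_connected G k -> forall v : vert G, k <= #|[set u | adj v u]|.
Proof.
move=> [Hk [HG Hc]] v; apply: NNPP => /negP; rewrite -ltnNge => Hlt.
pose S := [set u | adj v u].
have [y Hy] : exists y, y \notin v |: S.
  apply: NNPP => Hno.
  have : #|vert G| <= #|v |: S|.
    apply: subset_leq_card; apply/subsetP => y _; apply: NNPP => Hy; apply: Hno.
    by exists y; apply/negP.
  rewrite cardsU1 /S; have : (v \notin [set u | adj v u]) <= 1 by case: (_ \notin _). move: Hk Hlt; lia.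
move: Hy; rewrite !inE negb_or => /andP[Hyv HyS].
have Hvs : v \notin S by rewrite inE adj_irr.
have HyS' : y \notin S by rewrite inE.
have /connectP [p Hp El] := Hc S Hlt v y Hvs HyS'.
case: p Hp El => [|z p] /=; first by move=> _ E; move: Hyv; rewrite E eqxx.
by move=> /andP[/andP[/andP[Hvz _] Hz] _]; move: Hz; rewrite inE Hvz.
Qed.

Lemma sub_clique a b (G : graph) : subgraph (lollipop a b) G ->
  exists f : 'I_a -> vert G, forall i j, i != j -> adj (f i) (f j).
Proof.
move=> [g [Hinj Hadj]].
exists (fun i => g (lshift b i)) => i j Hij; apply: Hadj.
rewrite /lollipop /= /lol_adj /= !ltn_ord /= andbT.
apply/negP => /eqP /(congr1 val) /= E.
by move: Hij; rewrite (val_inj E) eqxx.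
Qed.

Lemma other_part m (p0 : 'I_m) : 1 < m -> exists p : 'I_m, p != p0.
Proof.
move=> m1; have [p Hp] : exists p : 'I_m, p \notin [:: p0] by apply: fresh; rewrite card_ord.
by exists p; move: Hp; rewrite inE.
Qed.

Lemma mp_nbhd m N (v : vert (mp m N)) : 1 < m -> N <= #|[set u | adj v u]|.
Proof.
move=> m1; have [p Hp] := other_part v.1 m1.
apply: (@leq_trans #|[set ((p, j) : vert (mp m N)) | j : 'I_N]|).
  by rewrite card_imset ?cardsT ?card_ord // => j1 j2 [].
apply: subset_leq_card; apply/subsetP => u /imsetP [j _ ->].
by rewrite inE /= /mp_adj /= eq_sym.
Qed.

Lemma mp_kconn m N : 1 < m -> 0 < N -> k_connected (mp m N) N.
Proof.
move=> m1 N0.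
have Hc : forall S : {set vert (mp m N)}, #|S| < N -> forall x y, x \notin S -> y \notin S ->
    connect [rel u v | adj u v && (u \notin S) && (v \notin S)] x y.
  move=> S HS x y Hx Hy.
  case: (eqVneq x.1 y.1) => Exy; last by apply: connect1; rewrite /= /mp_adj Exy Hx Hy.
  have [p Hp] := other_part x.1 m1.
  have [j Hj] : exists j : 'I_N, j \notin [seq z.2 | z <- enum S].
    by apply: fresh; rewrite size_map -cardE card_ord.
  have HzS : (p, j) \notin S.
    apply/negP => Hz; move: Hj; apply/negP/negPn; apply/mapP; exists (p, j) => //.
    by rewrite mem_enum.
  apply: (@connect_trans _ _ ((p, j) : vert (mp m N))).
    by apply: connect1; rewrite /= /mp_adj /= eq_sym Hp Hx HzS.
  by apply: connect1; rewrite /= /mp_adj /= -Exy Hp HzS Hy.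
split.
  rewrite card_prod !card_ord; nia.
split; last exact: Hc.
split; first by rewrite card_prod !card_ord; nia.
move=> x y; apply: connect_mono (Hc set0 _ x y _ _); rewrite ?cards0 ?inE //.
by move=> u v /= /andP[/andP[]].
Qed.

Lemma mp_connected m N : 1 < m -> 0 < N -> connected (mp m N).
Proof. by move=> m1 N0; have [_ []] := mp_kconn m1 N0. Qed.

Lemma mp_tw m N : 1 < m -> 0 < N -> N <= tw (mp m N).
Proof.
move=> m1 N0; apply: tw_ge => w Hw; apply: (bag_nbhd (S := setT) Hw).
  apply/set0Pn; exists ((Ordinal (ltnW m1), Ordinal N0) : vert (mp m N)); by rewrite inE.
move=> v _; apply: leq_trans (mp_nbhd v m1) _.
by apply: subset_leq_card; apply/subsetP => u; rewrite !inE.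
Qed.

Lemma mp_clique m N : 0 < N -> exists f : 'I_m -> vert (mp m N),
  forall i j, i != j -> adj (f i) (f j).
Proof.
move=> N0; exists (fun i => ((i, Ordinal N0) : vert (mp m N))) => i j Hij.
by rewrite /= /mp_adj.
Qed.

Lemma mp_noclique m N : ~ exists f : 'I_m.+1 -> vert (mp m N),
  forall i j, i != j -> adj (f i) (f j).
Proof.
move=> [f Hf].
have Hinj : injective (fun i => (f i).1).
  move=> i j E; apply/eqP/negPn/negP => /Hf; by rewrite /= /mp_adj E eqxx.
by have := leq_card _ Hinj; rewrite !card_ord ltnn.
Qed.

Lemma mp_kappa m N : 1 < m -> 0 < N -> N <= kappa (mp m N).
Proof. by move=> m1 N0; apply: kappa_ge; [exact: mp_connected | exact: mp_kconn]. Qed.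

Lemma card_vals n (A : {set 'I_n}) (s : seq nat) :
  (forall u, u \in A -> nat_of_ord u \in s) -> #|A| <= size s.
Proof.
move=> H; rewrite cardE -(size_map (@nat_of_ord n)); apply: uniq_leq_size.
  by rewrite (map_inj_uniq val_inj) enum_uniq.
by move=> x /mapP [u Hu ->]; apply: H; rewrite -mem_enum.
Qed.

Lemma lol_connected a b : 1 < a -> connected (lollipop a b).
Proof.
move=> a1; have ab : 0 < a + b by lia.
pose z0 : 'I_(a + b) := Ordinal ab.
have Hc : forall n (u : 'I_(a + b)), nat_of_ord u <= n -> connect (@adj (lollipop a b)) u z0.
  elim=> [|n IH] u Hu.
    by have -> : u = z0 by apply: val_inj => /=; lia.
  case: (eqVneq u z0) => [->|Huz]; first exact: connect0.
  case: (ltnP (nat_of_ord u) a) => Hua.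
    apply: connect1; rewrite /lollipop /= /lol_adj Huz /= Hua; lia.
  have Hu' : (nat_of_ord u).-1 < a + b by have := ltn_ord u; lia.
  apply: (@connect_trans _ _ (Ordinal Hu')).
    apply: connect1; rewrite /lollipop /= /lol_adj /=.
    apply/andP; split.
      by apply/negP => /eqP /(congr1 val) /=; lia.
    apply/orP; right; apply/andP; split => //; apply/eqP; lia.
  apply: IH => /=; lia.
split; first by rewrite card_ord.
move=> x y; apply: (@connect_trans _ _ z0); first exact: (Hc _ x (leqnn _)).
rewrite (sym_connect_sym (@adj_sym (lollipop a b))); exact: (Hc _ y (leqnn _)).
Qed.

Section LolDecomp.
Variables (a b : nat).
Hypothesis a2 : 1 < a.

Definition lpar (j : 'I_b.+1) : 'I_b.+1 := inord (nat_of_ord j).-1.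
Definition lbag (j : 'I_b.+1) : {set 'I_(a + b)} :=
  if nat_of_ord j == 0 then [set u : 'I_(a + b) | nat_of_ord u < a]
  else [set u : 'I_(a + b) | (nat_of_ord u == a + j - 2) || (nat_of_ord u == a + j - 1)].

Lemma lpar_val (j : 'I_b.+1) : nat_of_ord (lpar j) = (nat_of_ord j).-1.
Proof. by rewrite /lpar inordK //; have := ltn_ord j; lia. Qed.

Lemma lbag_spec (u : 'I_(a + b)) (j : 'I_b.+1) : u \in lbag j =
  ((nat_of_ord j == 0) && (nat_of_ord u < a)) ||
  ((0 < nat_of_ord j) && ((nat_of_ord u == a + j - 2) || (nat_of_ord u == a + j - 1))).
Proof.
rewrite /lbag; case: (eqVneq (nat_of_ord j) 0) => Hj; rewrite inE.
  by rewrite Hj /= orbF.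
by rewrite /= lt0n Hj.
Qed.

Lemma lol_decomp : has_tree_decomp (lollipop a b) a.-1.
Proof.
have dep_r : nat_of_ord (ord0 : 'I_b.+1) = 0 by [].
have dep_par : forall j : 'I_b.+1, j != ord0 -> nat_of_ord j = (nat_of_ord (lpar j)).+1.
  move=> j Hj; rewrite lpar_val; have : nat_of_ord j != 0.
    by apply/negP => /eqP E; move: Hj; rewrite (_ : j = ord0) ?eqxx //; apply: val_inj.
  lia.
exists 'I_b.+1, (ptrel ord0 lpar), lbag; split.
- exact: (ptrel_tree dep_r dep_par).
- move=> u; case: (ltnP (nat_of_ord u) a) => Hu.
    by exists ord0; rewrite lbag_spec /= Hu.
  have Hj : nat_of_ord u - a + 1 < b.+1 by have := ltn_ord u; lia.
  exists (Ordinal Hj); rewrite lbag_spec /=; apply/orP; right; apply/andP; split; first lia.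
  apply/orP; right; apply/eqP; lia.
- have Hb : forall u v : 'I_(a + b), (nat_of_ord u).+1 = nat_of_ord v -> a <= nat_of_ord v ->
      exists i, (u \in lbag i) && (v \in lbag i).
    move=> u v Huv Hav.
    have Hj : nat_of_ord v - a + 1 < b.+1 by have := ltn_ord v; lia.
    exists (Ordinal Hj); rewrite !lbag_spec /=.
    apply/andP; split; apply/orP; right; apply/andP; (split; first lia); apply/orP;
      [left | right]; apply/eqP; lia.
  move=> u v; rewrite /lollipop /= /lol_adj.
  move=> /andP[Huv /orP[/orP[/andP[Hua Hva]|/andP[/eqP H1 H2]]|/andP[/eqP H1 H2]]].
  + by exists ord0; rewrite !lbag_spec /= Hua Hva.
  + exact: Hb.
  + by have [i Hi] := Hb v u H1 H2; exists i; rewrite andbC.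
- move=> v i j Hi Hj.
  move: Hi Hj; rewrite !lbag_spec => Hi Hj.
  case: (eqVneq i j) => [->|Hij]; first exact: connect0.
  have Hne : nat_of_ord i != nat_of_ord j by apply/negP => /eqP E; move: Hij; rewrite (val_inj E) eqxx.
  have [E|E] : nat_of_ord j = (nat_of_ord i).+1 \/ nat_of_ord i = (nat_of_ord j).+1.
    move: Hi Hj Hne; case/orP=> /andP[Hi1 Hi2]; case/orP=> /andP[Hj1 Hj2]; move: Hi1 Hi2 Hj1 Hj2.
    + move=> /eqP Hi1 Hi2 /eqP Hj1 Hj2; lia.
    + move=> /eqP Hi1 Hi2 Hj1 /orP[/eqP|/eqP] Hj2; lia.
    + move=> Hi1 /orP[/eqP|/eqP] Hi2 /eqP Hj1 Hj2; lia.
    + move=> Hi1 /orP[/eqP|/eqP] Hi2 Hj1 /orP[/eqP|/eqP] Hj2; lia.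
  + apply: connect1; rewrite /= !lbag_spec Hi Hj !andbT /ptrel /=.
    apply/orP; right; apply/andP; split.
      by apply/negP => /eqP /(congr1 val) /=; lia.
    by apply/eqP; apply: ord_inj; rewrite lpar_val E.
  + apply: connect1; rewrite /= !lbag_spec Hi Hj !andbT /ptrel /=.
    apply/orP; left; apply/andP; split.
      by apply/negP => /eqP /(congr1 val) /=; lia.
    by apply/eqP; apply: ord_inj; rewrite lpar_val E.
- move=> j; rewrite /lbag; case: eqP => Hj.
    apply: leq_trans (card_vals (s := iota 0 a) _) _.
      by move=> u; rewrite inE mem_iota.
    by rewrite size_iota; lia.
  apply: leq_trans (card_vals (s := [:: a + j - 2; a + j - 1]) _) _.
    by move=> u; rewrite inE !inE.
  by rewrite /=; lia.
Qed.

End LolDecomp.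

Lemma lol_tw a b : 1 < a -> tw (lollipop a b) = a.-1.
Proof.
move=> a2; apply/eqP; rewrite eqn_leq; apply/andP; split; first exact: tw_le (lol_decomp b a2).
apply: tw_ge => w Hw.
pose S : {set vert (lollipop a b)} := [set u : 'I_(a + b) | nat_of_ord u < a].
apply: (bag_nbhd (S := S) Hw).
  have ab : 0 < a + b by lia.
  by apply/set0Pn; exists (Ordinal ab); rewrite inE /=; lia.
move=> v; rewrite inE => Hv; pose i0 : 'I_a := Ordinal Hv.
apply: (@leq_trans #|[set (lshift b i : vert (lollipop a b)) | i in [set~ i0]]|).
  by rewrite card_imset; [rewrite cardsC1 card_ord | exact: lshift_inj].
apply: subset_leq_card; apply/subsetP => u /imsetP [i Hi ->].
rewrite !inE /= ltn_ord /= /lol_adj /= ltn_ord Hv /= andbT.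
apply/negP => /eqP /(congr1 val) /= E; move: Hi; rewrite !inE.
by rewrite (_ : i = i0) ?eqxx //; apply: val_inj; rewrite /= -E.
Qed.

Lemma first_K (T : eqType) (K : pred T) s : has K s ->
  exists s1 z s2, [/\ s = s1 ++ z :: s2, z \in K & ~~ has K s1].
Proof.
elim: s => [|x s IH] //=; case Hx: (K x) => /=.
  by move=> _; exists [::], x, s.
move=> /IH [s1 [z [s2 [-> Hz Hs1]]]]; exists (x :: s1), z, s2; split=> //=.
by rewrite Hx.
Qed.

Lemma seg (T : eqType) (K : pred T) b : forall n t y, size t <= n -> y \in K ->
  (count K t).+1 * b + count K t <= size t ->
  exists u w r, [/\ t = u ++ w ++ r, size w = b, ~~ has K w & last y u \in K].
Proof.
elim=> [|n IH] t y Hn Hy Hc.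
  have : size t = 0 by lia.
  move/size0nil => Et; subst t; have Hb : b = 0 by move: Hc => /=; lia.
  by exists [::], [::], [::]; split=> //; rewrite Hb.
case Hh: (has K (take b t)); last first.
  exists [::], (take b t), (drop b t); split=> //.
  - by rewrite cat_take_drop.
  - by apply: size_takel; move: Hc; rewrite mulSn; lia.
  - by rewrite Hh.
have [s1 [z [s2 [E Hz Hs1]]]] := first_K Hh.
pose t2 := s2 ++ drop b t.
have Et : t = s1 ++ z :: t2 by rewrite /t2 -cat_cons catA -E cat_take_drop.
have Hs1b : size s1 < b.
  have : size (take b t) <= b by rewrite size_take; case: ltnP => //; lia.
  by rewrite E size_cat /=; lia.
have Hc1 : count K s1 = 0 by apply/eqP; rewrite -leqn0 leqNgt -has_count.
have HKz : K z by exact: Hz.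
have Ec : count K t = (count K t2).+1 by rewrite Et count_cat /= Hc1 HKz.
have Es : size t = size s1 + (size t2).+1 by rewrite Et size_cat.
have := IH t2 z _ Hz _.
case.
- by move: Hn; rewrite Es; lia.
- move: Hc; rewrite Ec Es !mulSn; lia.
move=> u [w [r [E2 Hw Hwk Hl]]].
exists (s1 ++ z :: u), w, r; split=> //.
- by rewrite Et E2 -catA.
- by rewrite last_cat.
Qed.

Lemma count_img (T : eqType) (s l : seq T) : uniq l -> count (mem s) l <= size s.
Proof.
move=> Hu; rewrite -size_filter; apply: uniq_leq_size; first exact: filter_uniq.
by move=> x; rewrite mem_filter => /andP[].
Qed.

Definition swp n (j il i : 'I_n) : 'I_n := if i == j then il else if i == il then j else i.

Lemma swpK n (j il : 'I_n) : involutive (swp j il).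
Proof.
move=> i; rewrite /swp.
case: (eqVneq i j) => [->|Hij]; first by rewrite eqxx; case: (eqVneq il j) => [->|]; rewrite ?eqxx.
case: (eqVneq i il) => [->|Hil]; first by rewrite eqxx.
by rewrite (negbTE Hij) (negbTE Hil).
Qed.

Lemma swp_il n (j il : 'I_n) : swp j il il = j.
Proof. by rewrite /swp; case: (eqVneq il j) => [->|]; rewrite ?eqxx. Qed.

Lemma clique_to_lol (G : graph) a b (f : 'I_a -> vert G) (a0 : 0 < a) y (w : seq (vert G)) :
  (forall i j, i != j -> adj (f i) (f j)) ->
  y \in [seq f i | i <- enum 'I_a] -> size w = b -> uniq w -> path (@adj G) y w ->
  ~~ has (mem [seq f i | i <- enum 'I_a]) w -> subgraph (lollipop a b) G.
Proof.
move=> Hf /mapP [j _ Ey] Hs Hu Hp Hw.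
pose il : 'I_a := Ordinal (predlt a0).
pose f' i := f (swp j il i).
apply: (@embed_lol G a b f' y w a0) => //.
- move=> i i' Hii'; apply: Hf; apply/negP => /eqP E.
  by move: Hii'; rewrite -(swpK j il i) E swpK eqxx.
- by rewrite /f' swp_il Ey.
- move=> x Hx i; apply/negP => /eqP E; move: Hw; apply/negP/negPn/hasP; exists x => //.
  by rewrite E /f'; apply/mapP; exists (swp j il i); rewrite ?mem_enum.
Qed.

Lemma lol_tw_def a b : 2 < a -> defines_sub tw (lollipop a b) (clique_f a).
Proof.
move=> a3; have a0 : 0 < a by lia.
split; first exact: clique_sentence.
exists (a.+1 * b + a + 2) => G HG Hk.
have [x0 _] : exists x : vert G, true by case: HG => /card_gt0P [x _] _; exists x.
rewrite (@models_clique G a x0 a0); split; last exact: sub_clique.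
move=> [f Hf].
pose il : 'I_a := Ordinal (predlt a0).
have [Hd|[t [Ht Hut Hst]]] := long_path_or_decomp (f il) (a.+1 * b + a + 1) HG.
  by have := tw_le Hd; lia.
pose K := [seq f i | i <- enum 'I_a].
have Hcnt : count (mem K) t <= a.
  have : uniq t by move: Hut => /= /andP[].
  by move/(count_img K); rewrite /K size_map size_enum_ord.
have HyK : f il \in K by apply/mapP; exists il; rewrite ?mem_enum.
have Hm : (count (mem K) t).+1 * b <= a.+1 * b by rewrite leq_mul2r ltnS Hcnt orbT.
have Hcond : (count (mem K) t).+1 * b + count (mem K) t <= size t.
  move: Hm Hcnt Hst; lia.
have [u [w [r [Et Hw HwK Hl]]]] := @seg _ (mem K) b (size t) t (f il) (leqnn _) HyK Hcond.
apply: (clique_to_lol a0 Hf Hl Hw).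
- by move: Hut => /= /andP[_]; rewrite Et cat_uniq => /and3P[_ _]; rewrite cat_uniq => /andP[].
- by move: Ht; rewrite Et cat_path => /andP[_]; rewrite cat_path => /andP[].
- exact: HwK.
Qed.

Lemma lol_kappa_def a b : 2 < a -> defines_sub kappa (lollipop a b) (clique_f a).
Proof.
move=> a3; have a0 : 0 < a by lia.
split; first exact: clique_sentence.
exists (a + b) => G HG Hk.
have [x0 _] : exists x : vert G, true by case: HG => /card_gt0P [x _] _; exists x.
rewrite (@models_clique G a x0 a0); split; last exact: sub_clique.
move=> [f Hf].
have Hdeg := kconn_deg (kappa_le HG Hk).
pose il : 'I_a := Ordinal (predlt a0).
have [p [Hs Hu Hp Hd]] := greedy f (f il) Hdeg (leqnn b).
exact: (@embed_lol G a b f (f il) p a0 Hf erefl Hs Hu Hp Hd).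
Qed.

Lemma lol_in_mp m b N : 0 < m -> m.+1 + b <= N -> subgraph (lollipop m.+1 b) (mp m.+1 N).
Proof.
move=> m0 HN; have N0 : 0 < N by lia.
have [f Hf] := @mp_clique m.+1 N N0.
have a0 : 0 < m.+1 by [].
pose il : 'I_m.+1 := Ordinal (predlt a0).
have Hdeg : forall v : vert (mp m.+1 N), m.+1 + b <= #|[set u | adj v u]|.
  by move=> v; apply: leq_trans HN (mp_nbhd v _).
have [p [Hs Hu Hp Hd]] := greedy f (f il) Hdeg (leqnn b).
exact: (@embed_lol _ m.+1 b f (f il) p a0 Hf erefl Hs Hu Hp Hd).
Qed.

Lemma lower_bound (pi : graph -> nat) m b f : 1 < m ->
  (forall N, 0 < N -> N <= pi (mp m N)) -> (forall N, 0 < N -> N <= pi (mp m.+1 N)) ->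
  defines_sub pi (lollipop m.+1 b) f -> (qdepth f <= m \/ vwidth f <= m) -> False.
Proof.
move=> m1 H1 H2 [Hs [k Hk]] Hc.
pose N := k + m + b + 1.
have N0 : 0 < N by rewrite /N; lia.
have kN : k <= N by rewrite /N; lia.
have m1' : 1 < m.+1 by lia.
have HG := Hk (mp m N) (mp_connected m1 N0) (leq_trans kN (H1 N N0)).
have HH := Hk (mp m.+1 N) (mp_connected m1' N0) (leq_trans kN (H2 N N0)).
have mN : m <= N by rewrite /N; lia.
have Hef := @ef_models m N f (ltnW m1) mN Hs Hc.
have Hsub : subgraph (lollipop m.+1 b) (mp m.+1 N) by apply: lol_in_mp; rewrite /N; lia.
apply: (@mp_noclique m N); apply: (@sub_clique _ b).
by apply/HG/Hef/HH.
Qed.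

Lemma D_lol a b : 2 < a -> D_pi tw (lollipop a b) = a.
Proof.
move=> a3.
have Hlow : forall f, defines_sub tw (lollipop a b) f -> a <= qdepth f.
  move=> f Hf; rewrite leqNgt; apply/negP => Hlt.
  have [m Ea] : exists m, a = m.+1 by exists a.-1; lia.
  subst a.
  apply: (@lower_bound tw m b f _ _ _ Hf); first lia.
  - by move=> N N0; apply: mp_tw; lia.
  - by move=> N N0; apply: mp_tw; lia.
  - left; lia.
pose P n := (exists f, defines_sub tw (lollipop a b) f /\ qdepth f = n) /\
            forall f, defines_sub tw (lollipop a b) f -> n <= qdepth f.
have HP : P a.
  split=> //; exists (clique_f a); split; [exact: lol_tw_def | exact: clique_qdepth].
have := epsilon_spec (inhabits 0) P (ex_intro _ a HP).
change (epsilon (inhabits 0) P) with (D_pi tw (lollipop a b)).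
move=> [[f [Hf Ef]] Hmin].
have := Hmin _ (lol_tw_def b a3); rewrite clique_qdepth.
have := Hlow f Hf; rewrite Ef; lia.
Qed.

Lemma W_lol a b : 2 < a -> W_pi kappa (lollipop a b) = a.
Proof.
move=> a3; have a0 : 0 < a by lia.
have Hlow : forall f, defines_sub kappa (lollipop a b) f -> a <= vwidth f.
  move=> f Hf; rewrite leqNgt; apply/negP => Hlt.
  have [m Ea] : exists m, a = m.+1 by exists a.-1; lia.
  subst a.
  apply: (@lower_bound kappa m b f _ _ _ Hf); first lia.
  - by move=> N N0; apply: mp_kappa; lia.
  - by move=> N N0; apply: mp_kappa; lia.
  - right; lia.
pose P n := (exists f, defines_sub kappa (lollipop a b) f /\ vwidth f = n) /\
            forall f, defines_sub kappa (lollipop a b) f -> n <= vwidth f.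
have HP : P a.
  split=> //; exists (clique_f a); split; [exact: lol_kappa_def | exact: clique_vwidth].
have := epsilon_spec (inhabits 0) P (ex_intro _ a HP).
change (epsilon (inhabits 0) P) with (W_pi kappa (lollipop a b)).
move=> [[f [Hf Ef]] Hmin].
have := Hmin _ (lol_kappa_def b a3); rewrite clique_vwidth //.
have := Hlow f Hf; rewrite Ef; lia.
Qed.

Theorem theorem6 :
  (forall a l : nat, 3 <= a <= l ->
     exists F : graph,
       [/\ connected F, nverts F = l, tw F = a.-1 & D_pi tw F <= a])
  /\
  (forall a b : nat, 3 <= a ->
     D_pi tw (lollipop a b) = a /\ W_pi kappa (lollipop a b) = a).
Proof.
split.
  move=> a l /andP[a3 al]; exists (lollipop a (l - a)); split.
  - apply: lol_connected; lia.
  - by rewrite /nverts /= card_ord; lia.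
  - apply: lol_tw; lia.
  - by rewrite D_lol.
move=> a b a3; split; [exact: D_lol | exact: W_lol].
Qed.
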